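(* Let $n\ge3$. Let $\mathcal M=(G,\{1\},\{1\},\emptyset)$ be a strongly connected linear compartmental model with $n-1$ compartments, input and output in compartment $1$, and no leaks. Let $H$ be obtained from $G$ by adding a leaf edge at compartment $1$ (new compartment $n$, edges $1\to n$ with parameter $a_{n1}$ and $n\to1$ with parameter $a_{1n}$), and let $\mathcal M'=(H,\{1\},\{n\},\emptyset)$. Let $A$ and $A'$ be the compartmental matrices of $\mathcal M$ and $\mathcal M'$. Define $c_0,\dots,c_{n-1}$ and $d_0,\dots,d_{n-2}$ by $\det(\lambda I-A)=\sum_{i=0}^{n-1}c_i\lambda^i$ and $\det((\lambda I-A)^{1,1})=\sum_{i=0}^{n-2}d_i\lambda^i$ (so $c_{n-1}=d_{n-2}=1$), and define $c^*_0,\dots,c^*_{n-1}$ and $d^*_0,\dots,d^*_{n-2}$ by $\det(\lambda I-A')=\lambda^n+\sum_{i=0}^{n-1}c^*_i\lambda^i$ and $\det((\lambda I-A')^{1,n})=\sum_{i=0}^{n-2}d^*_i\lambda^i$. Then: (1) (i) $d^*_i=(-1)^{n-1}a_{n1}d_i$ for $i=0,\dots,n-2$; (ii) $c^*_i=c_{i-1}+a_{1n}c_i+a_{n1}d_{i-1}$ for $i=1,\dots,n-1$; (iii) $c^*_0=c_0=0$. (2) If $c_{\mathcal M}$ and $c_{\mathcal M'}$ denote the coefficient maps of $\mathcal M$ and $\mathcal M'$, then the rank of the Jacobian matrix of $c_{\mathcal M'}$ at a generic point equals $2$ plus the rank of the Jacobian matrix of $c_{\mathcal M}$ at a generic point.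
   Context: A linear compartmental model $\mathcal M=(G,In,Out,Leak)$ consists of a finite directed graph $G=(V_G,E_G)$ without multi-edges, compartments $V_G=\{1,\dots,n\}$, and subsets $In,Out,Leak\subseteq V_G$; edge $j\to i$ carries parameter $a_{ij}$ and each $i\in Leak$ carries $a_{0i}$. The compartmental matrix $A$ has $A_{ii}=-\sum_{k:\,i\to k\in E_G}a_{ki}$ (minus $a_{0i}$ if $i\in Leak$), $A_{ij}=a_{ij}$ if $j\to i\in E_G$, $0$ otherwise. $B^{i,j}$ denotes $B$ with row $i$ and column $j$ removed. The input-output equations are $\det(\partial I-A)y_i=\sum_{j\in In}(-1)^{i+j}\det((\partial I-A)^{j,i})u_j$ ($i\in Out$), $\partial I$ the diagonal matrix of $d/dt$'s; the coefficient map sends the parameter vector in $\mathbb R^{|E_G|+|Leak|}$ to the vector of all non-constant coefficients (polynomials in the parameters) of these equations. Adding a leaf edge at $i$ to a graph with vertex set $\{1,\dots,n-1\}$ gives the graph with vertex set $\{1,\dots,n\}$ and edge set $E_G\cup\{i\to n,n\to i\}$. *)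

(* Defs.v *)
From HB Require Import structures.
From mathcomp Require Import all_boot all_order all_algebra.
From mathcomp Require Import mpoly.
Set Implicit Arguments. Unset Strict Implicit. Unset Printing Implicit Defensive.
Import Order.TTheory GRing.Theory Num.Theory.
Local Open Scope ring_scope.

(* Compartments 1..k are represented by 'I_k (compartment i+1 <-> ordinal i).
   A graph is an edge relation E : rel 'I_k with  E j i  meaning  j -> i.   *)

Definition strongly_connected k (E : rel 'I_k) : Prop :=
  forall i j : 'I_k, connect E i j.

Definition loopless k (E : rel 'I_k) : Prop := forall i : 'I_k, ~~ E i i.

(* Compartmental matrix with parameter values a i j (= a_{ij}, used on
   edges j -> i) and leak values a0 i (= a_{0i}, used for i in L). *)
Definition compmx (S : comNzRingType) k (E : rel 'I_k) (L : {set 'I_k})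
    (a : 'I_k -> 'I_k -> S) (a0 : 'I_k -> S) : 'M[S]_k :=
  \matrix_(i, j)
    if i == j then - (\sum_(l | E i l) a l i) - (if i \in L then a0 i else 0)
    else if E j i then a i j else 0.

(* Adding a leaf edge at compartment 1 (= ord0) to a graph on k.+1 vertices:
   new compartment n = ord_max of 'I_k.+2, edges 1 -> n and n -> 1. *)
Definition add_leaf1 k (E : rel 'I_k.+1) : rel 'I_k.+2 :=
  fun x y =>
    match unlift ord_max x, unlift ord_max y with
    | Some x', Some y' => E x' y'
    | Some x', None => x' == ord0
    | None, Some y' => y' == ord0
    | None, None => false
    end.

(* Parameters of a model: edges j -> i (stored as pairs (i,j), parameter a_{ij})
   and leaks. *)
Definition param_t k (E : rel 'I_k) (L : {set 'I_k}) : finType :=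
  ({p : 'I_k * 'I_k | E p.2 p.1} + {i : 'I_k | i \in L})%type.

Definition nparams k (E : rel 'I_k) (L : {set 'I_k}) := #|{: param_t E L}|.

Section Generic.
Variables (R : realFieldType) (k : nat) (E : rel 'I_k) (L : {set 'I_k}).
Local Notation m := (nparams E L).
Local Notation P := {mpoly R[m]}.

(* symbolic parameters: the coordinate functions on R^(|E|+|Leak|) *)
Definition gen_a (i j : 'I_k) : P :=
  oapp (fun p : {p : 'I_k * 'I_k | E p.2 p.1} =>
          'X_(enum_rank (inl p : param_t E L))) 0 (insub (i, j)).
Definition gen_a0 (i : 'I_k) : P :=
  oapp (fun q : {i : 'I_k | i \in L} =>
          'X_(enum_rank (inr q : param_t E L))) 0 (insub i).

Definition gen_compmx : 'M[P]_k := compmx E L gen_a gen_a0.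

(* All coefficients of the input-output equations
     det(dI - A) y_i = sum_{j in In} (-1)^(i+j) det((dI - A)^{j,i}) u_j,
   i in Out, followed by keeping only the non-constant ones. *)
Definition io_coeffs (In Out : {set 'I_k}) : seq P :=
  flatten [seq polyseq (char_poly gen_compmx) ++
               flatten [seq polyseq ((-1) ^+ (val i + val j)%N *
                            \det (row' j (col' i (char_poly_mx gen_compmx))))
                       | j : 'I_k <- enum In]
          | i : 'I_k <- enum Out].

Definition nonconst (p : P) : bool := p != (p@_mnm0)%:MP.

Definition io_coef_map (In Out : {set 'I_k}) : seq P :=
  [seq p <- io_coeffs In Out | nonconst p].

End Generic.

Definition jacobian (R : realFieldType) m (cs : seq {mpoly R[m]}) (x : 'I_m -> R)
  : 'M[R]_(size cs, m) :=
  \matrix_(i, j) (mderiv j cs`_i).@[x].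

(* r is the rank of the Jacobian at a generic point, i.e. the maximal rank,
   attained on a nonempty Zariski-open (dense) set of parameters. *)
Definition generic_jacobian_rank (R : realFieldType) m (cs : seq {mpoly R[m]})
    (r : nat) : Prop :=
  (exists x, \rank (jacobian cs x) = r) /\ (forall x, (\rank (jacobian cs x) <= r)%N).

(* Main.v *)
Require Import Defs.
From HB Require Import structures.
From mathcomp Require Import all_boot all_order all_algebra.
From mathcomp Require Import mpoly.
From mathcomp Require Import ring zify.
From Stdlib Require Import FunctionalExtensionality.
Set Implicit Arguments. Unset Strict Implicit. Unset Printing Implicit Defensive.
Import Order.TTheory GRing.Theory Num.Theory.
Local Open Scope ring_scope.
Lemma minor_cpm (T : comNzRingType) n (B : 'M[T]_n.+1) i :
  row' i (col' i (char_poly_mx B)) = char_poly_mx (row' i (col' i B)).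
Proof. by apply/matrixP => x y; rewrite !mxE (inj_eq lift_inj). Qed.

Lemma det_add_delta (T : comNzRingType) n (M : 'M[T]_n.+1) x :
  \det (M + x *: delta_mx 0 0) = \det M + x * cofactor M 0 0.
Proof.
rewrite (expand_det_row _ ord0) (expand_det_row M ord0).
have cofE j : cofactor (M + x *: delta_mx 0 0) ord0 j = cofactor M ord0 j.
  rewrite /cofactor; congr (_ * \det _); apply/matrixP => r s.
  by rewrite !mxE eq_sym (negbTE (neq_lift _ _)) /= mulr0 addr0.
under eq_bigr do rewrite cofE !mxE mulrDl.
rewrite big_split /=; congr (_ + _).
rewrite (bigD1 ord0) //= big1 ?addr0; first by rewrite mulr1.
move=> j nj; have -> : (j == 0) = false by exact/negbTE.
by rewrite mulr0 mul0r.
Qed.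

Lemma sgsq (T : comNzRingType) k : (-1 : T) ^+ k * (-1) ^+ k = 1.
Proof. by rewrite -exprMn mulrNN mulr1 expr1n. Qed.

Lemma row'E (T : Type) m n (B : 'M[T]_(m.+1,n)) i0 i j : row' i0 B i j = B (lift i0 i) j.
Proof. by rewrite mxE. Qed.
Lemma col'E (T : Type) m n (B : 'M[T]_(m,n.+1)) j0 i j : col' j0 B i j = B i (lift j0 j).
Proof. by rewrite mxE. Qed.
Lemma cpmE (T : comNzRingType) n (B : 'M[T]_n) i j :
  char_poly_mx B i j = 'X *+ (i == j) - (B i j)%:P.
Proof. by rewrite !mxE. Qed.
Section P1.
Variables (S : comNzRingType) (k : nat) (E : rel 'I_k.+1).
Variable (a' : 'I_k.+2 -> 'I_k.+2 -> S).
Local Notation E' := (add_leaf1 E).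
Local Notation a := (fun i j : 'I_k.+1 => a' (lift ord_max i) (lift ord_max j)).
Local Notation A := (compmx E set0 a (fun _ => 0)).
Local Notation A' := (compmx E' set0 a' (fun _ => 0)).
Local Notation an1 := (a' ord_max ord0).
Local Notation a1n := (a' ord0 ord_max).

Lemma LE1 (x y : 'I_k.+1) : E' (lift ord_max x) (lift ord_max y) = E x y.
Proof. by rewrite /add_leaf1 !liftK. Qed.
Lemma LE2 (x : 'I_k.+1) : E' (lift ord_max x) ord_max = (x == ord0).
Proof. by rewrite /add_leaf1 liftK unlift_none. Qed.
Lemma LE3 (y : 'I_k.+1) : E' ord_max (lift ord_max y) = (y == ord0).
Proof. by rewrite /add_leaf1 liftK unlift_none. Qed.
Lemma LE4 : E' ord_max ord_max = false.
Proof. by rewrite /add_leaf1 unlift_none. Qed.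
Lemma lift0 : lift ord_max (ord0 : 'I_k.+1) = ord0 :> 'I_k.+2.
Proof. by apply: val_inj. Qed.

Lemma sumL (T : nmodType) (F : 'I_k.+2 -> T) :
  \sum_(l < k.+2) F l = \sum_(l < k.+1) F (lift ord_max l) + F ord_max.
Proof.
rewrite big_ord_recr /=; congr (_ + _); apply: eq_bigr => l _; congr F.
by apply: val_inj; rewrite /= /bump leqNgt ltn_ord.
Qed.

Lemma AE x y : A x y = if x == y then - (\sum_(l | E x l) a l x)
                        else if E y x then a x y else 0.
Proof. by rewrite /compmx mxE in_set0 subr0. Qed.

Lemma A'E_ll (x y : 'I_k.+1) : A' (lift ord_max x) (lift ord_max y) =
   A x y - ((x == ord0) && (y == ord0))%:R * an1.
Proof.
rewrite AE /compmx mxE in_set0 subr0 (inj_eq lift_inj) LE1.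
case: eqP => [<-|/eqP nxy]; last first.
  have -> : (x == ord0) && (y == ord0) = false.
    by apply/negbTE; apply: contra nxy => /andP[/eqP-> /eqP->].
  by rewrite mul0r subr0.
rewrite andbb big_mkcond /= sumL LE2.
have -> : \sum_(l < k.+1) (if E' (lift ord_max x) (lift ord_max l)
       then a' (lift ord_max l) (lift ord_max x) else 0) =
   \sum_(l < k.+1 | E x l) a' (lift ord_max l) (lift ord_max x).
  by rewrite [RHS]big_mkcond; apply: eq_bigr => l _; rewrite LE1.
case: (x =P ord0) => [->|] /=; last by rewrite mul0r !subr0 addr0.
by rewrite mul1r opprD lift0.
Qed.

Lemma A'E_ml (y : 'I_k.+1) : A' ord_max (lift ord_max y) = if y == ord0 then an1 else 0.
Proof.
rewrite /compmx mxE (negbTE (neq_lift _ _)) LE2.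
by case: (y =P ord0) => // ->; rewrite lift0.
Qed.

Lemma A'E_lm (x : 'I_k.+1) : A' (lift ord_max x) ord_max = if x == ord0 then a1n else 0.
Proof.
rewrite /compmx mxE eq_sym (negbTE (neq_lift _ _)) LE3.
by case: (x =P ord0) => // ->; rewrite lift0.
Qed.

Lemma A'E_mm : A' ord_max ord_max = - a1n.
Proof.
rewrite /compmx mxE eqxx in_set0 subr0 big_mkcond sumL LE4 addr0 /=.
rewrite (bigD1 ord0) //= LE3 eqxx lift0 big1 ?addr0 // => i /negbTE ni.
by rewrite LE3 ni.
Qed.

Local Notation M' := (char_poly_mx A').
Local Notation d := (\det (row' ord0 (col' ord0 (char_poly_mx A)))).

Lemma minorA' : row' ord_max (col' ord_max A') = A - an1 *: delta_mx 0 0.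
Proof.
apply/matrixP => i j; rewrite [LHS]mxE [LHS]mxE A'E_ll; move: (A) => B; rewrite !mxE mulrC.
by case: (_ && _); rewrite ?mulr1 ?mulr0.
Qed.

Lemma cpm_delta : char_poly_mx (A - an1 *: delta_mx 0 0) =
   char_poly_mx A + an1%:P *: delta_mx 0 0.
Proof.
apply/matrixP => i j; move: (A) => B; rewrite !mxE.
case: (_ && _); rewrite /= ?mulr1 ?mulr0 ?subr0 ?addr0 //.
rewrite polyCB; ring.
Qed.

Lemma cof_mm : cofactor M' ord_max ord_max = char_poly A + an1%:P * d.
Proof.
rewrite /cofactor [X in _ * \det X]minor_cpm minorA' cpm_delta det_add_delta.
by rewrite -signr_odd addnn odd_double expr0 mul1r /cofactor expr0 mul1r.
Qed.

Lemma ordA : lift (lift ord_max (ord0 : 'I_k.+1)) (ord_max : 'I_k.+1) = ord_max :> 'I_k.+2.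
Proof. by apply: val_inj. Qed.

Lemma ordB (j : 'I_k) : lift (lift ord_max (ord0 : 'I_k.+1)) (lift ord_max j) =
  lift ord_max (lift ord0 j) :> 'I_k.+2.
Proof. apply: val_inj; rewrite /= /bump; have := ltn_ord j; lia. Qed.

Lemma ordC : lift ord0 (ord_max : 'I_k.+1) = ord_max :> 'I_k.+2.
Proof. by apply: val_inj. Qed.

Lemma ordD (j : 'I_k) : lift ord0 (lift ord_max j) = lift ord_max (lift ord0 j) :> 'I_k.+2.
Proof. apply: val_inj; rewrite /= /bump; have := ltn_ord j; lia. Qed.

Lemma nl0 (i : 'I_k) : (lift ord0 i == ord0 :> 'I_k.+1) = false.
Proof. by rewrite eq_sym (negbTE (neq_lift _ _)). Qed.

Lemma cof_m0 : cofactor M' ord_max (lift ord_max ord0) = a1n%:P * d.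
Proof.
rewrite /cofactor (expand_det_col _ ord_max) big_ord_recl big1 ?addr0; last first.
  move=> i _; rewrite !(row'E, col'E, cpmE) ordA eq_sym (negbTE (neq_lift _ _)) A'E_lm nl0.
  by rewrite mulr0n polyC0 subr0 ?oppr0 mul0r.
rewrite !(row'E, col'E, cpmE) ordA eq_sym (negbTE (neq_lift _ _)) A'E_lm eqxx mulr0n sub0r.
rewrite /cofactor.
have -> : row' ord0 (col' ord_max (row' ord_max (col' (lift ord_max ord0) M'))) =
          row' ord0 (col' ord0 (char_poly_mx A)).
  apply/matrixP => i j; rewrite !(row'E, col'E, cpmE) ordB (inj_eq lift_inj) A'E_ll nl0 /=.
  by rewrite mul0r subr0.
rewrite /cofactor /= addn0 add0n exprS.
transitivity (((-1)^+k * (-1)^+k) * (a1n%:P * d)); first ring.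
by rewrite sgsq mul1r.
Qed.

Lemma ds_eq : \det (row' ord0 (col' ord_max M')) = ((-1) ^+ k.+1 * an1)%:P * d.
Proof.
rewrite (expand_det_row _ ord_max) big_ord_recl big1 ?addr0; last first.
  move=> i _; rewrite !(row'E, col'E, cpmE) ordC (negbTE (neq_lift _ _)) A'E_ml nl0.
  by rewrite mulr0n polyC0 subr0 ?oppr0 mul0r.
rewrite !(row'E, col'E, cpmE) ordC (negbTE (neq_lift _ _)) A'E_ml eqxx mulr0n sub0r.
rewrite /cofactor.
have -> : row' ord_max (col' ord0 (row' ord0 (col' ord_max M'))) =
          row' ord0 (col' ord0 (char_poly_mx A)).
  apply/matrixP => i j; rewrite !(row'E, col'E, cpmE) ordD (inj_eq lift_inj) A'E_ll nl0 /=.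
  by rewrite mul0r subr0.
rewrite /cofactor /= addn0 polyCM polyC_exp polyCN polyC1 exprS.
ring.
Qed.

Lemma cs_eq : char_poly A' =
  ('X + a1n%:P) * (char_poly A + an1%:P * d) - (a1n * an1)%:P * d.
Proof.
rewrite /char_poly (expand_det_row _ ord_max) sumL big_ord_recl big1 ?addr0; last first.
  move=> i _; rewrite !(row'E, col'E, cpmE) (negbTE (neq_lift _ _)) A'E_ml nl0.
  by rewrite mulr0n polyC0 subr0 ?oppr0 mul0r.
rewrite -/(char_poly A') cof_m0 cof_mm !(row'E, col'E, cpmE) (negbTE (neq_lift _ _)) A'E_ml eqxx.
rewrite A'E_mm eqxx mulr0n sub0r mulr1n polyCN polyCM -/(char_poly A); ring.
Qed.

End P1.
Lemma detA0 (T : comNzRingType) n (E : rel 'I_n.+1) (a : 'I_n.+1 -> 'I_n.+1 -> T) :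
  loopless E -> \det (compmx E set0 a (fun _ => 0)) = 0.
Proof.
move=> hl; set A := compmx E set0 a (fun _ => 0).
have h1 : const_mx 1 *m A = 0 :> 'rV_n.+1.
  apply/matrixP => z j; rewrite !mxE (bigD1 j) //= mxE mul1r.
  rewrite {1}/A mxE eqxx in_set0 subr0.
  rewrite big_mkcond (bigD1 j) //= (negbTE (hl j)) add0r.
  rewrite [X in - X + _](eq_bigr (fun i => const_mx 1 z i * A i j)); first by rewrite addNr.
  by move=> i /negbTE ni; rewrite /A !mxE ni mul1r.
have : (const_mx 1 : 'rV[T]_n.+1) *m A *m \adj A = 0 by rewrite h1 mul0mx.
rewrite -mulmxA mul_mx_adj mul_mx_scalar => /matrixP /(_ 0 ord0).
by rewrite !mxE mulr1.
Qed.

Lemma part1 (k : nat) (E : rel 'I_k.+1) (hloop : loopless E) :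
  (forall (S : comNzRingType) (a' : 'I_k.+2 -> 'I_k.+2 -> S),
    let a := fun i j : 'I_k.+1 => a' (lift ord_max i) (lift ord_max j) in
    let A := compmx E set0 a (fun _ => 0) in
    let A' := compmx (add_leaf1 E) set0 a' (fun _ => 0) in
    let c := char_poly A in
    let d := \det (row' ord0 (col' ord0 (char_poly_mx A))) in
    let cs := char_poly A' in
    let ds := \det (row' ord0 (col' ord_max (char_poly_mx A'))) in
    let an1 := a' ord_max ord0 in
    let a1n := a' ord0 ord_max in
    (forall i : nat, (i <= k)%N -> ds`_i = (-1) ^+ k.+1 * an1 * d`_i) /\
    (forall i : nat, (1 <= i <= k.+1)%N ->
        cs`_i = c`_i.-1 + a1n * c`_i + an1 * d`_i.-1) /\
    (cs`_0 = 0 /\ c`_0 = 0)).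
Proof.
move=> S a'; cbv zeta.
have c0 : (char_poly (compmx E set0 (fun i j : 'I_k.+1 => a' (lift ord_max i) (lift ord_max j)) (fun _ => 0)))`_0 = 0.
  by rewrite char_poly_det detA0 // mulr0.
split; first by move=> i _; rewrite ds_eq coefCM.
rewrite cs_eq polyCM.
set c := char_poly _; set d := \det _.
have -> : ('X + (a' ord0 ord_max)%:P) * (c + (a' ord_max ord0)%:P * d) -
   (a' ord0 ord_max)%:P * (a' ord_max ord0)%:P * d =
   'X * c + (a' ord0 ord_max)%:P * c + (a' ord_max ord0)%:P * ('X * d) by ring.
split.
  move=> i /andP[i1 _]; rewrite !coefD !coefCM !coefXM.
  by case: i i1.
have c0' : c`_0 = 0 := c0.
by rewrite !coefD !coefCM !coefXM /= c0' !mulr0 add0r addr0.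
Qed.
Section Grad.
Variables (R : fieldType) (n : nat).
Implicit Types (p q : {mpoly R[n]}) (x : 'I_n -> R).

Definition grad x p : 'rV[R]_n := \row_j (mderiv j p).@[x].

Lemma gradD x p q : grad x (p + q) = grad x p + grad x q.
Proof. by apply/rowP => j; rewrite !mxE mderivD mevalD. Qed.
Lemma gradN x p : grad x (- p) = - grad x p.
Proof. by apply/rowP => j; rewrite !mxE mderivN mevalN. Qed.
Lemma gradB x p q : grad x (p - q) = grad x p - grad x q.
Proof. by rewrite gradD gradN. Qed.
Lemma gradZ x c p : grad x (c *: p) = c *: grad x p.
Proof. by apply/rowP => j; rewrite !mxE mderivZ mevalZ. Qed.
Lemma gradM x p q : grad x (p * q) = p.@[x] *: grad x q + q.@[x] *: grad x p.
Proof.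
apply/rowP => j; rewrite !mxE mderivM mevalD !mevalM addrC.
by rewrite [_.@[x] * q.@[x]]mulrC.
Qed.
Lemma gradC x c : grad x c%:MP = 0.
Proof. by apply/rowP => j; rewrite !mxE mderivC meval0. Qed.
Lemma grad0 x : grad x 0 = 0.
Proof. by rewrite -mpolyC0 gradC. Qed.
Lemma gradX x i : grad x 'X_i = delta_mx 0 i.
Proof.
apply/rowP => j; rewrite !mxE mderivX mnm1E eqxx /= eq_sym.
case: (i =P j) => [->|ne].
  rewrite eqxx /= mulr1n scale1r.
  have -> : (U_(j) - U_(j))%MM = 0%MM by apply/mnmP => l; rewrite !mnmE subnn.
  by rewrite mpolyX0 meval1.
have /negbTE-> : j != i by apply/eqP => e; apply: ne.
by rewrite /= mulr0n scale0r meval0.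
Qed.
End Grad.
Lemma mderivXU (R : fieldType) n (i j : 'I_n) :
  mderiv j ('X_i : {mpoly R[n]}) = ((i == j)%:R)%:MP.
Proof.
rewrite mderivX mnm1E; case: (i =P j) => [->|ne] /=.
  rewrite mulr1n scale1r.
  have -> : (U_(j) - U_(j))%MM = 0%MM by apply/mnmP => l; rewrite !mnmE subnn.
  by rewrite mpolyX0.
by rewrite /= mulr0n scale0r mpolyC0.
Qed.

Definition Fm (R : ringType) a b (f : 'I_a -> 'I_b) : 'M[R]_(a, b) :=
  \matrix_(i, j) (f i == j)%:R.

Lemma FmFmT (R : ringType) a b c (f : 'I_a -> 'I_b) (g : 'I_c -> 'I_b) :
  Fm R f *m (Fm R g)^T = \matrix_(i, j) (g j == f i)%:R.
Proof.
apply/matrixP => i j; rewrite !mxE (bigD1 (f i)) //= big1 ?addr0.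
  by rewrite !mxE eqxx mul1r.
by move=> t nt; rewrite !mxE eq_sym (negbTE nt) mul0r.
Qed.

Lemma FmFmT1 (R : ringType) a b (f : 'I_a -> 'I_b) : injective f ->
  Fm R f *m (Fm R f)^T = 1%:M.
Proof.
move=> fi; rewrite FmFmT; apply/matrixP => i j; rewrite !mxE (inj_eq fi).
by rewrite eq_sym.
Qed.

Lemma FmFmT0 (R : ringType) a b c (f : 'I_a -> 'I_b) (g : 'I_c -> 'I_b) :
  (forall i j, f i != g j) -> Fm R f *m (Fm R g)^T = 0.
Proof.
move=> fg; rewrite FmFmT; apply/matrixP => i j; rewrite !mxE eq_sym.
by rewrite (negbTE (fg i j)).
Qed.

Lemma row_Fm (R : ringType) a b (f : 'I_a -> 'I_b) i : row i (Fm R f) = delta_mx 0 (f i).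
Proof. by apply/rowP => j; rewrite !mxE eqxx eq_sym. Qed.

Section Chain.
Variables (R : fieldType) (m m' : nat) (sg : 'I_m -> 'I_m').
Hypothesis sg_inj : injective sg.
Definition lqs := [tuple ('X_(sg i) : {mpoly R[m']}) | i < m].
Definition phi (p : {mpoly R[m]}) : {mpoly R[m']} := comp_mpoly lqs p.

Lemma phiX i : phi 'X_i = 'X_(sg i).
Proof. by rewrite /phi comp_mpolyXU -tnth_nth tnth_mktuple. Qed.

Lemma phi_eval (x : 'I_m' -> R) p : (phi p).@[x] = p.@[fun i => x (sg i)].
Proof.
rewrite /phi comp_mpoly_meval; apply: meval_eq => i.
by rewrite tnth_mktuple mevalXU.
Qed.

Definition chainQ (p : {mpoly R[m]}) := forall j,
  mderiv j (phi p) = \sum_i (sg i == j)%:R *: phi (mderiv i p).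

Lemma chainQD p q : chainQ p -> chainQ q -> chainQ (p + q).
Proof.
move=> hp hq j; rewrite /phi rmorphD mderivD -!/(phi _) hp hq -big_split /=.
by apply: eq_bigr => i _; rewrite mderivD /phi rmorphD scalerDr.
Qed.

Lemma chainQM p q : chainQ p -> chainQ q -> chainQ (p * q).
Proof.
move=> hp hq j; rewrite /phi rmorphM mderivM -!/(phi _) hp hq.
rewrite mulr_suml mulr_sumr -big_split /=.
apply: eq_bigr => i _; rewrite mderivM /phi rmorphD !rmorphM -!/(phi _).
by rewrite scalerDr -scalerAl -scalerAr.
Qed.

Lemma chainQC c : chainQ c%:MP.
Proof.
move=> j; rewrite /phi comp_mpolyC mderivC big1 // => i _.
by rewrite mderivC comp_mpolyC mpolyC0 scaler0.
Qed.

Lemma chainQX l : chainQ 'X_l.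
Proof.
move=> j; rewrite phiX mderivXU (bigD1 l) //= big1 ?addr0.
  by rewrite mderivXU eqxx /phi comp_mpolyC -mul_mpolyC mulr1.
move=> i ni; rewrite mderivXU [l == i]eq_sym (negbTE ni) /phi comp_mpolyC.
by rewrite mpolyC0 scaler0.
Qed.

Lemma chainQ_all p : chainQ p.
Proof.
elim/mpolyind: p; first by rewrite -mpolyC0; apply: chainQC.
move=> c mm p _ _ hp; apply: chainQD => //.
rewrite -mul_mpolyC; apply: chainQM; first exact: chainQC.
rewrite mpolyXE_id; apply: (big_ind chainQ); first by rewrite -mpolyC1; apply: chainQC.
  by move=> ???; apply: chainQM.
move=> i _; elim: (mm i) => [|e ih]; first by rewrite expr0 -mpolyC1; apply: chainQC.
by rewrite exprS; apply: chainQM => //; apply: chainQX.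
Qed.

Definition Sig : 'M[R]_(m, m') := Fm R sg.

Lemma grad_phi (x : 'I_m' -> R) p :
  grad x (phi p) = grad (fun i => x (sg i)) p *m Sig.
Proof.
apply/rowP => j; rewrite !mxE chainQ_all.
rewrite (big_morph _ (mevalD x) (meval0 x)); apply: eq_bigr => i _.
by rewrite mevalZ phi_eval /Sig /Fm !mxE mulrC.
Qed.

End Chain.
Section Jac.
Variables (R : realFieldType) (n : nat).

Lemma row_jac (cs : seq {mpoly R[n]}) x (i : 'I_(size cs)) :
  row i (jacobian cs x) = grad x cs`_i.
Proof. by apply/rowP => j; rewrite !mxE. Qed.

Lemma jac_sub (cs : seq {mpoly R[n]}) x p (B : 'M_(p, n)) :
  (forall q, q \in cs -> (grad x q <= B)%MS) -> (jacobian cs x <= B)%MS.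
Proof. by move=> H; apply/row_subP => i; rewrite row_jac; apply/H/mem_nth. Qed.

Lemma mem_jac (cs : seq {mpoly R[n]}) x q :
  q \in cs -> (grad x q <= jacobian cs x)%MS.
Proof.
by case/(nthP 0) => i lt <-; rewrite -(row_jac _ (Ordinal lt)); apply: row_sub.
Qed.

Lemma coef_sub (q : {poly {mpoly R[n]}}) x p (B : 'M_(p, n)) :
  (forall r, r \in polyseq q -> (grad x r <= B)%MS) ->
  forall t, (grad x q`_t <= B)%MS.
Proof.
move=> H t; case: (ltnP t (size q)) => lt; first by apply/H/mem_nth.
by rewrite nth_default // grad0 sub0mx.
Qed.

Lemma polyseq_sub (q : {poly {mpoly R[n]}}) (P : pred {mpoly R[n]}) :
  (forall t, P q`_t) -> forall r, r \in polyseq q -> P r.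
Proof. by move=> H r /(nthP 0) [i _ <-]. Qed.

Variables (E : rel 'I_n.+1) (L : {set 'I_n.+1}).
Hypothesis Hn : n = nparams E L.
End Jac.
Section IO.
Variables (R : realFieldType) (kk : nat) (E : rel 'I_kk) (L : {set 'I_kk}) (i j : 'I_kk).
Local Notation G := (@gen_compmx R _ E L).
Local Notation D := ((-1) ^+ (i + j)%N * \det (row' j (col' i (char_poly_mx G)))).
Local Notation J x := (jacobian (@io_coef_map R _ E L [set j] [set i]) x).

Lemma io11 : @io_coeffs R _ E L [set j] [set i] = polyseq (char_poly G) ++ polyseq D.
Proof. by rewrite /io_coeffs !enum_set1 /= !cats0. Qed.

Lemma io_sub x p (B : 'M_(p, _)) :
  (forall t, (grad x (char_poly G)`_t <= B)%MS) -> (forall t, (grad x D`_t <= B)%MS) ->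
  (J x <= B)%MS.
Proof.
move=> hc hd; apply: (jac_sub (B := B)) => q; rewrite mem_filter => /andP[_].
rewrite io11 mem_cat => /orP[]; [exact: (polyseq_sub (P := fun r => (grad x r <= B)%MS) hc) | exact: (polyseq_sub (P := fun r => (grad x r <= B)%MS) hd)].
Qed.

Lemma io_in x q : q \in @io_coeffs R _ E L [set j] [set i] -> (grad x q <= J x)%MS.
Proof.
move=> qin; case nq: (nonconst q).
  by apply: mem_jac; rewrite mem_filter nq.
by move/negbFE/eqP: nq => ->; rewrite gradC sub0mx.
Qed.

Lemma io_in_c x t : (grad x (char_poly G)`_t <= J x)%MS.
Proof. by apply: coef_sub => r rin; apply: io_in; rewrite io11 mem_cat rin. Qed.
Lemma io_in_d x t : (grad x D`_t <= J x)%MS.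
Proof. by apply: coef_sub => r rin; apply: io_in; rewrite io11 mem_cat rin orbT. Qed.
End IO.
Section Helpers.
Variables (R : fieldType) (n : nat).

Lemma sub_cancel p q (a b : 'M[R]_(p, n)) (J : 'M_(q, n)) :
  ((a + b)%R <= J)%MS -> (b <= J)%MS -> (a <= J)%MS.
Proof.
move=> hab hb; have -> : a = (a + b) + (-1) *: b by rewrite scaleN1r addrK.
exact: (addmx_sub hab (scalemx_sub _ hb)).
Qed.

Lemma sub_opp p q (a : 'M[R]_(p, n)) (J : 'M_(q, n)) : (a <= J)%MS -> (- a <= J)%MS.
Proof. by move=> h; rewrite -scaleN1r; apply: scalemx_sub. Qed.

Lemma grad_Cpow x (c : R) i : grad x ((c%:MP : {mpoly R[n]}) ^+ i) = 0.
Proof.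
elim: i => [|i ih]; first by rewrite expr0 -mpolyC1 gradC.
by rewrite exprS gradM ih gradC !scaler0 addr0.
Qed.

Lemma grad_horner x p (J : 'M_(p, n)) (q : {poly {mpoly R[n]}}) (c : R) :
  (forall t, (grad x q`_t <= J)%MS) -> (grad x q.[c%:MP] <= J)%MS.
Proof.
move=> h; rewrite horner_coef.
rewrite (big_morph _ (gradD x) (grad0 x)); apply: summx_sub => i _.
by rewrite gradM grad_Cpow scaler0 add0r; apply: scalemx_sub.
Qed.
End Helpers.

Lemma nonroot (R : realFieldType) (p : {poly R}) : p != 0 -> exists a, ~~ root p a.
Proof.
move=> p0; pose rs := [seq (i%:R : R) | i <- iota 0 (size p)].
case: (boolP (all (root p) rs)) => [hall|/allPn [y _ hy]]; last by exists y.
suff : uniq rs by move/(max_poly_roots p0 hall); rewrite /rs size_map size_iota ltnn.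
by rewrite /rs map_inj_uniq ?iota_uniq // => i j /eqP; rewrite eqr_nat => /eqP.
Qed.
Section Model.
Variables (R : realFieldType) (k : nat) (E : rel 'I_k.+1).
Local Notation E' := (add_leaf1 E).
Local Notation m := (nparams E set0).
Local Notation m' := (nparams E' set0).
Local Notation pt := (param_t E set0).
Local Notation pt' := (param_t E' set0).

Lemma noq (q : {i : 'I_k.+1 | i \in set0}) : False.
Proof. by case: q => i; rewrite in_set0. Qed.

Definition liftp (p : {p : 'I_k.+1 * 'I_k.+1 | E p.2 p.1}) :
  {p : 'I_k.+2 * 'I_k.+2 | E' p.2 p.1} :=
  exist (fun p : 'I_k.+2 * 'I_k.+2 => E' p.2 p.1)
    (lift ord_max (sval p).1, lift ord_max (sval p).2) (etrans (LE1 E _ _) (svalP p)).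

Definition sg0 (t : pt) : pt' :=
  match t with inl p => inl (liftp p) | inr q => False_rect _ (noq q) end.

Definition sg (i : 'I_m) : 'I_m' := enum_rank (sg0 (enum_val i)).

Lemma sg0_inj : injective sg0.
Proof.
case=> [p|q]; last by case: (noq q).
case=> [p'|q']; last by case: (noq q').
move=> [] /(can_inj (bumpK _)) e1 /(can_inj (bumpK _)) e2; congr inl; apply: val_inj.
case: p e1 e2 => [[x y] /= _]; case: p' => [[x' y'] /= _] e1 e2.
by congr pair; apply: val_inj.
Qed.

Lemma sg_inj : injective sg.
Proof. by move=> i j /enum_rank_inj /sg0_inj /enum_val_inj. Qed.

Lemma Hu : E' ord_max ord0. Proof. by rewrite -lift0 LE3. Qed.
Lemma Hv : E' ord0 ord_max. Proof. by rewrite -lift0 LE2. Qed.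
Definition pu : {p : 'I_k.+2 * 'I_k.+2 | E' p.2 p.1} :=
  exist (fun p : 'I_k.+2 * 'I_k.+2 => E' p.2 p.1) (ord0, ord_max) Hu.
Definition pv : {p : 'I_k.+2 * 'I_k.+2 | E' p.2 p.1} :=
  exist (fun p : 'I_k.+2 * 'I_k.+2 => E' p.2 p.1) (ord_max, ord0) Hv.
Definition u : 'I_m' := enum_rank (inl pu : pt').
Definition v : 'I_m' := enum_rank (inl pv : pt').

Lemma sg_u i : sg i != u.
Proof.
apply/eqP => /enum_rank_inj; rewrite /sg0; case: (enum_val i) => [p|q]; last by case: (noq q).
move=> [] _; rewrite /bump; have := ltn_ord (sval p).2; lia.
Qed.

Lemma sg_v i : sg i != v.
Proof.
apply/eqP => /enum_rank_inj; rewrite /sg0; case: (enum_val i) => [p|q]; last by case: (noq q).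
move=> [] + _; rewrite /bump; have := ltn_ord (sval p).1; lia.
Qed.

Lemma u_v : u != v.
Proof.
by apply/eqP => /enum_rank_inj [].
Qed.

Local Notation P := {mpoly R[m]}.
Local Notation P' := {mpoly R[m']}.
Local Notation ph := (comp_mpoly (lqs R sg)).

Lemma gen_a_lift (i j : 'I_k.+1) : @gen_a R _ E' set0 (lift ord_max i) (lift ord_max j) =
   ph (@gen_a R _ E set0 i j).
Proof.
rewrite /gen_a; case: insubP => [p Ep vp|nE]; last first.
  by move: nE; rewrite /= LE1 => nE; rewrite insubN //= comp_mpoly0.
have Eji : E (i, j).2 (i, j).1 by move: Ep; rewrite /= LE1.
rewrite (insubT (fun p : 'I_k.+1 * 'I_k.+1 => E p.2 p.1) Eji) /=.
rewrite -/(phi sg _) phiX /sg enum_rankK /=; congr 'X_(enum_rank (inl _)).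
by apply: val_inj; rewrite /= vp.
Qed.

Local Notation G := (@gen_compmx R _ E set0).
Local Notation G' := (@gen_compmx R _ E' set0).
Local Notation ga' := (@gen_a R _ E' set0).
Local Notation A := (compmx E set0 (fun i j : 'I_k.+1 => ga' (lift ord_max i) (lift ord_max j)) (fun _ => 0)).
Local Notation cM := (char_poly G).
Local Notation dM := (\det (row' ord0 (col' ord0 (char_poly_mx G)))).

Lemma G'E : G' = compmx E' set0 ga' (fun _ => 0).
Proof. by apply/matrixP => i j; rewrite !mxE in_set0. Qed.

Lemma map_G : map_mx ph G = A.
Proof.
apply/matrixP => i j; rewrite !mxE !in_set0 !subr0.
case: eqP => _.
  by rewrite rmorphN rmorph_sum; congr (- _); apply: eq_bigr => l _; rewrite gen_a_lift.
by case: (E j i); rewrite ?gen_a_lift ?rmorph0.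
Qed.

Lemma charA : char_poly A = map_poly ph cM.
Proof. by rewrite -map_G map_char_poly. Qed.

Lemma detA : \det (row' ord0 (col' ord0 (char_poly_mx A))) = map_poly ph dM.
Proof. by rewrite -map_G -map_char_poly_mx -map_col' -map_row' det_map_mx. Qed.

Lemma a1nE : ga' ord0 ord_max = 'X_u.
Proof.
rewrite /gen_a insubT /=; first exact: Hu.
by move=> H; congr 'X_(enum_rank (inl _)); apply: val_inj.
Qed.
Lemma an1E : ga' ord_max ord0 = 'X_v.
Proof.
rewrite /gen_a insubT /=; first exact: Hv.
by move=> H; congr 'X_(enum_rank (inl _)); apply: val_inj.
Qed.

Lemma csE : char_poly G' = 'X * map_poly ph cM + ('X_u)%:P * map_poly ph cM +
   ('X_v)%:P * ('X * map_poly ph dM).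
Proof.
rewrite G'E cs_eq charA detA a1nE an1E polyCM; ring.
Qed.

Lemma dsE : (-1) ^+ ((ord_max : 'I_k.+2) + (ord0 : 'I_k.+2))%N *
   \det (row' ord0 (col' ord_max (char_poly_mx G'))) = ('X_v)%:P * map_poly ph dM.
Proof.
rewrite G'E ds_eq detA an1E /= addn0 polyCM polyC_exp polyCN polyC1 !mulrA sgsq.
by rewrite mul1r.
Qed.

Lemma dM_lead : dM`_k = 1.
Proof.
rewrite minor_cpm; have /monicP := char_poly_monic (row' ord0 (col' ord0 G)).
by rewrite lead_coefE size_char_poly.
Qed.

Local Notation JM x := (jacobian (@io_coef_map R _ E set0 [set ord0] [set ord0]) x).
Local Notation J' x := (jacobian (@io_coef_map R _ E' set0 [set ord0] [set ord_max]) x).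
Definition e2 (s : 'I_2) : 'I_m' := if s == 0 then u else v.
Local Notation th x := (fun i => x (sg i)).
Definition Bm (x : 'I_m' -> R) := col_mx (JM (th x) *m Sig R sg) (Fm R e2).

Lemma sub_colL p q r n (X : 'M[R]_(p, n)) (Y : 'M_(q, n)) (Z : 'M_(r, n)) :
  (X <= Y)%MS -> (X <= col_mx Y Z)%MS.
Proof. by move=> h; apply: submx_trans h _; rewrite -addsmxE addsmxSl. Qed.
Lemma sub_colR p q r n (X : 'M[R]_(p, n)) (Y : 'M_(q, n)) (Z : 'M_(r, n)) :
  (X <= Z)%MS -> (X <= col_mx Y Z)%MS.
Proof. by move=> h; apply: submx_trans h _; rewrite -addsmxE addsmxSr. Qed.

Lemma JM_c x t : (grad x cM`_t <= JM x)%MS.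
Proof. exact: io_in_c. Qed.
Lemma JM_d x t : (grad x dM`_t <= JM x)%MS.
Proof. by have := io_in_d ord0 ord0 x t; rewrite /= expr0 mul1r. Qed.

Lemma eu_B x : ((delta_mx 0 u : 'rV_m') <= Bm x)%MS.
Proof. by apply: sub_colR; rewrite -[u]/(e2 0) -row_Fm row_sub. Qed.
Lemma ev_B x : ((delta_mx 0 v : 'rV_m') <= Bm x)%MS.
Proof. by apply: sub_colR; rewrite -[v]/(e2 1) -row_Fm row_sub. Qed.

Lemma phi_B x q : (grad (th x) q <= JM (th x))%MS -> (grad x (ph q) <= Bm x)%MS.
Proof. by move=> h; rewrite -/(phi sg q) grad_phi; apply: sub_colL; apply: submxMr. Qed.

Lemma J'_B x : (J' x <= Bm x)%MS.
Proof.
apply: io_sub => t.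
  rewrite csE !(coefD, coefXM, coefCM, coef_map) /=.
  rewrite !gradD !gradM !gradX; apply: addmx_sub; [apply: addmx_sub|].
  - by case: t => [|t] /=; rewrite ?grad0 ?sub0mx //; apply: phi_B; apply: JM_c.
  - by apply: addmx_sub; apply: scalemx_sub; [apply: phi_B; apply: JM_c | apply: eu_B].
  apply: addmx_sub; apply: scalemx_sub; last exact: ev_B.
  by case: t => [|t] /=; rewrite ?grad0 ?sub0mx //; apply: phi_B; apply: JM_d.
rewrite dsE coefCM coef_map /= gradM gradX.
by apply: addmx_sub; apply: scalemx_sub; [apply: phi_B; apply: JM_d | apply: ev_B].
Qed.

Lemma rank_B x : (\rank (Bm x) <= \rank (JM (th x)) + 2)%N.
Proof.
rewrite /Bm -addsmxE.
apply: leq_trans (mxrank_adds_leqif _ _).1 _.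
by apply: leq_add; [apply: mxrankM_maxl | apply: rank_leq_row].
Qed.

Lemma upper x : (\rank (J' x) <= \rank (JM (th x)) + 2)%N.
Proof. exact: leq_trans (mxrankS (J'_B x)) (rank_B x). Qed.

Lemma e2_inj : injective e2.
Proof.
have uv := u_v.
move=> s s'; rewrite /e2; case: (s =P 0) => [->|n0]; case: (s' =P 0) => [->|n0'] //.
- by move/eqP; rewrite (negbTE uv).
- by move/eqP; rewrite eq_sym (negbTE uv).
move=> _; apply: val_inj; case: s s' n0 n0' => [[|[|//]] ?] [[|[|//]] ?] //=.
- by case; apply: val_inj.
- by move=> _ []; apply: val_inj.
Qed.

Lemma rank_Bm_low x : (\rank (JM (th x)) + 2 <= \rank (Bm x))%N.
Proof.
pose Q := row_mx (Sig R sg)^T (Fm R e2)^T.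
apply: leq_trans (mxrankM_maxl _ Q).
have -> : Bm x *m Q = block_mx (JM (th x)) 0 0 1%:M.
  have h1 : Fm R sg *m (Fm R e2)^T = 0.
    by apply: FmFmT0 => i j; rewrite /e2; case: (j == 0); [exact: sg_u | exact: sg_v].
  have h2 : Fm R e2 *m (Fm R sg)^T = 0.
    by apply: FmFmT0 => i j; rewrite eq_sym /e2; case: (i == 0); [exact: sg_u | exact: sg_v].
  have h3 : Fm R sg *m (Fm R sg)^T = 1%:M by apply: FmFmT1; exact: sg_inj.
  have h4 : Fm R e2 *m (Fm R e2)^T = 1%:M by apply: FmFmT1; exact: e2_inj.
  by rewrite /Bm /Q mul_col_row -!mulmxA /Sig h1 h2 h3 h4 mulmx0 mulmx1.
by rewrite rank_diag_block_mx mxrank1.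
Qed.

Section Lower.
Variable x : 'I_m' -> R.
Hypothesis hv : x v = 1.
Hypothesis hroot : ~~ root (char_poly (map_mx (meval (th x)) G)) (- x u).
Local Notation J := (J' x).

Lemma F1 t : (grad x ('X_v * ph dM`_t) <= J)%MS.
Proof.
have := io_in_d ord_max ord0 x t; rewrite dsE.
by rewrite coefCM coef_map.
Qed.

Lemma F2 : ((delta_mx 0 v : 'rV_m') <= J)%MS.
Proof. by have := F1 k; rewrite dM_lead rmorph1 mulr1 gradX. Qed.

Lemma F3 t : (grad x (ph dM`_t) <= J)%MS.
Proof.
have := F1 t; rewrite gradM gradX mevalXU hv scale1r => h.
by apply: sub_cancel h _; apply: scalemx_sub; exact: F2.
Qed.

Local Notation fc := (map_poly ph cM).
Local Notation fd := (map_poly ph dM).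

Lemma F5 t : (grad x (('X_v)%:P * ('X * fd))`_t <= J)%MS.
Proof.
rewrite coefCM coefXM; case: t => [|t] /=; first by rewrite mulr0 grad0 sub0mx.
by rewrite coef_map; apply: F1.
Qed.

Lemma F6 t : (grad x (('X + ('X_u)%:P) * fc)`_t <= J)%MS.
Proof.
have -> : ('X + ('X_u)%:P) * fc = char_poly G' - ('X_v)%:P * ('X * fd).
  by rewrite csE; ring.
rewrite coefB gradB; apply: addmx_sub; first exact: io_in_c.
by apply: sub_opp; apply: F5.
Qed.

Lemma F7 : ((delta_mx 0 u : 'rV_m') <= J)%MS.
Proof.
have h := grad_horner (- x u) F6.
have e1 : (ph (- x u)%:MP) = (- x u)%:MP by rewrite comp_mpolyC.
rewrite hornerM hornerD hornerX hornerC -e1 horner_map e1 gradM gradD gradC gradX add0r in h.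
rewrite mevalD mevalC mevalXU addNr scale0r add0r -/(phi sg _) phi_eval in h.
set w := _.@[_] in h.
have wE : w = (char_poly (map_mx (meval (th x)) G)).[- x u].
  rewrite /w -map_char_poly -[in RHS](mevalC (th x) (- x u)) horner_map //.
have w0 : w != 0 by rewrite wE.
have -> : (delta_mx 0 u : 'rV_m') = w^-1 *: (w *: delta_mx 0 u) by rewrite scalerA mulVf // scale1r.
exact: scalemx_sub.
Qed.

Lemma F8 t : (grad x (ph cM`_t + x u *: ph cM`_t.+1) <= J)%MS.
Proof.
have := F6 t.+1; rewrite mulrDl coefD coefXM coefCM /= !coef_map => h.
rewrite gradD gradM gradX mevalXU in h.
rewrite gradD gradZ; apply: (sub_cancel (b := (ph cM`_t.+1).@[x] *: delta_mx 0 u)).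
  by rewrite -addrA.
by apply: scalemx_sub; exact: F7.
Qed.

Lemma F9 t : (grad x (ph cM`_t) <= J)%MS.
Proof.
suff H : forall s t, (size cM <= t + s)%N -> (grad x (ph cM`_t) <= J)%MS.
  by apply: (H (size cM)); rewrite leq_addl.
elim=> [|s ih] t0 hs.
  by rewrite addn0 in hs; rewrite nth_default // rmorph0 grad0 sub0mx.
have h1 : (grad x (ph cM`_t0.+1) <= J)%MS by apply: ih; rewrite addSnnS.
have := F8 t0; rewrite gradD gradZ => h.
by apply: sub_cancel h _; exact: scalemx_sub.
Qed.

Lemma B_J : (Bm x <= J)%MS.
Proof.
rewrite /Bm col_mx_sub; apply/andP; split.
  apply/row_subP => i; rewrite row_mul row_jac -grad_phi.
  have qin : (@io_coef_map R _ E set0 [set ord0] [set ord0])`_i \in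
      @io_coeffs R _ E set0 [set ord0] [set ord0].
    by have := mem_nth 0 (ltn_ord i); rewrite mem_filter => /andP[].
  rewrite io11 mem_cat in qin; case/orP: qin => qin.
    exact: (polyseq_sub (P := fun r => (grad x (phi sg r) <= J)%MS) F9 qin).
  rewrite /= expr0 mul1r in qin.
  exact: (polyseq_sub (P := fun r => (grad x (phi sg r) <= J)%MS) F3 qin).
apply/row_subP => s; rewrite row_Fm /e2; case: (s == 0); [exact: F7 | exact: F2].
Qed.

End Lower.
Lemma part2 (r : nat) :
  generic_jacobian_rank (@io_coef_map R _ E set0 [set ord0] [set ord0]) r ->
  generic_jacobian_rank (@io_coef_map R _ E' set0 [set ord0] [set ord_max]) r.+2.
Proof.
move=> [[t0 ht0] hall]; split; last first.
  by move=> x; apply: leq_trans (upper x) _; rewrite addn2 ltnS; apply: hall.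
have p0 : char_poly (map_mx (meval t0) G) != 0 by apply: monic_neq0; apply: char_poly_monic.
have [a ha] := nonroot p0.
pose x (t : 'I_m') : R := if t == u then - a else if t == v then 1 else
  if [pick i | sg i == t] is Some i then t0 i else 0.
have xu : x u = - a by rewrite /x eqxx.
have xv : x v = 1 by rewrite /x eq_sym (negbTE u_v) eqxx.
have xt : th x = t0.
  apply: functional_extensionality => i; rewrite /x (negbTE (sg_u i)) (negbTE (sg_v i)).
  by case: pickP => [j /eqP /sg_inj -> //| /(_ i)]; rewrite eqxx.
exists x; apply/eqP; rewrite eqn_leq; apply/andP; split.
  by have := upper x; rewrite xt ht0 addn2.
have hroot : ~~ root (char_poly (map_mx (meval (th x)) G)) (- x u) by rewrite xt xu opprK.
apply: leq_trans (mxrankS (B_J xv hroot)).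
by apply: leq_trans (rank_Bm_low x); rewrite xt ht0 addn2.
Qed.

End Model.

Unset Implicit Arguments.

(* n = k.+2 compartments in M', so n >= 3 <-> k >= 1.  G lives on 'I_k.+1
   (compartment 1 = ord0), H = add_leaf1 G on 'I_k.+2 (compartment n = ord_max). *)
Theorem proposition4p14 (R : realFieldType) (k : nat) (hk : (1 <= k)%N)
    (E : rel 'I_k.+1) (hloop : loopless E) (hsc : strongly_connected E) :
  (forall (S : comNzRingType) (a' : 'I_k.+2 -> 'I_k.+2 -> S),
    let a := fun i j : 'I_k.+1 => a' (lift ord_max i) (lift ord_max j) in
    let A := compmx E set0 a (fun _ => 0) in
    let A' := compmx (add_leaf1 E) set0 a' (fun _ => 0) in
    let c := char_poly A in
    let d := \det (row' ord0 (col' ord0 (char_poly_mx A))) in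
    let cs := char_poly A' in
    let ds := \det (row' ord0 (col' ord_max (char_poly_mx A'))) in
    let an1 := a' ord_max ord0 in
    let a1n := a' ord0 ord_max in
    (forall i : nat, (i <= k)%N -> ds`_i = (-1) ^+ k.+1 * an1 * d`_i) /\
    (forall i : nat, (1 <= i <= k.+1)%N ->
        cs`_i = c`_i.-1 + a1n * c`_i + an1 * d`_i.-1) /\
    (cs`_0 = 0 /\ c`_0 = 0)) /\
  (forall r : nat,
    generic_jacobian_rank (@io_coef_map R _ E set0 [set ord0] [set ord0]) r ->
    generic_jacobian_rank
      (@io_coef_map R _ (add_leaf1 E) set0 [set ord0] [set ord_max]) r.+2).
Proof.
split; first exact: part1 hloop.
by move=> r; apply: part2.
Qed.
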